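(* Let $b>1$. Assume that for any $L$, any anytime neural network (ANN) of depth $L$ has anytime predictions at every depth $i > \frac{L}{b}$ that are competitive against the optimal predictor of depth $i$. Consider the EANN built from ANNs of exponentially increasing depths $b^0, b^1, b^2, \dots$, as described in the context. Then after $B$ layers of computation, the EANN produces anytime predictions that are competitive against the optimal predictor of depth $\frac{B}{C}$ for some $C>1$ (depending on $B$), such that $$\sup_B C = 2 + \frac{1}{b-1},$$ and $C$ has expectation $$E_{B\sim \mathrm{uniform}(1,L)}[C] \le 1 - \frac{1}{2b} + \frac{1+\ln(b)}{b-1},$$ where $L$ denotes the total number of layers of the EANN.
   Context: An anytime neural network (ANN) of depth $L$ is a feed-forward network computing feature maps $x_1,\dots,x_L$ layer by layer, with an auxiliary prediction attached to the feature maps, so that after computing $i$ layers a prediction is available. The ''optimal of depth $i$'' means the predictor obtained by training a network of depth $i$ (cost $i$ layers) only for its final prediction; a prediction is ''competitive against the optimal of depth $d$'' if its quality is comparable to that optimal predictor. Cost is measured in number of layers computed. An EANN (ensemble of exponentially deepening ANNs) consists of ANNs numbered $1,2,3,\dots$, where ANN number $n+1$ has depth $b^{n}$ (so ANN 1 has depth $1$). The ANNs are computed sequentially in order of depth; ANN $n+1$ starts only after ANNs $1,\dots,n$ are fully computed. Thus after $B$ layers of computation, with $B = z + \sum_{i=0}^{n-1} b^i$ where $0 < z \le b^n$, the EANN is at depth $z$ of ANN number $n+1$. At that moment the EANN outputs the anytime prediction of ANN $n+1$ at depth $z$ if $z > b^{n-1}$ (which by assumption is competitive with the optimal of depth $z$),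 and otherwise reuses the final prediction of ANN number $n$ (of depth $b^{n-1}$, competitive with the optimal of depth $b^{n-1}$). The quantity $C$ is the ratio of the consumed budget $B$ to the depth of the optimal predictor that the EANN's current prediction is competitive against. *)

(* Defs.v *)
From Stdlib Require Import Reals Lra ClassicalEpsilon.
From Coquelicot Require Import Coquelicot.
Open Scope R_scope.

(* geom b n = sum_{i=0}^{n-1} b^i : total number of layers of ANNs 1..n
   (ANN number k+1 has depth b^k). *)
Fixpoint geom (b : R) (n : nat) : R :=
  match n with
  | O => 0
  | S k => geom b k + b ^ k
  end.

(* After a budget of B layers, the EANN is inside ANN number n+1, where n is
   the (unique) index with  B = z + geom b n,  0 < z <= b^n,
   i.e.  geom b n < B <= geom b (S n). *)
Definition eann_index (b B : R) : nat :=
  epsilon (inhabits O) (fun n => geom b n < B <= geom b (S n)).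

(* z : the depth reached inside the current ANN *)
Definition eann_z (b B : R) : R := B - geom b (eann_index b B).

(* Depth of the optimal predictor that the current EANN prediction is
   competitive against: z if z > b^(n-1) (anytime prediction of ANN n+1,
   competitive by assumption), otherwise b^(n-1) (final prediction of ANN n).
   For n = 0 (first ANN, depth 1), the prediction at depth z is used. *)
Definition eann_depth (b B : R) : R :=
  match eann_index b B with
  | O => eann_z b B
  | S m => if Rlt_dec (b ^ m) (eann_z b B) then eann_z b B else b ^ m
  end.

Definition eann_C (b B : R) : R := B / eann_depth b B.

(* Main.v *)
Require Import Defs.
From Stdlib Require Import Reals Lra Lia ClassicalEpsilon Arith.
From Coquelicot Require Import Coquelicot.
Open Scope R_scope.

Lemma geom_closed b n : geom b n * (b - 1) = b ^ n - 1.
Proof. induction n as [|n IH]; simpl. ring. rewrite Rmult_plus_distr_r, IH; ring. Qed.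

Lemma pow_pos' b n : 1 < b -> 0 < b ^ n.
Proof. intros; apply pow_lt; lra. Qed.

Lemma pow_ge1 b n : 1 < b -> 1 <= b ^ n.
Proof. intros; apply pow_R1_Rle; lra. Qed.

Lemma pow_le_S b n : 1 < b -> b ^ n <= b ^ S n.
Proof. intros; simpl; pose proof (pow_pos' b n H); nra. Qed.

Lemma geom_ge0 b n : 1 < b -> 0 <= geom b n.
Proof. intros; induction n; simpl. lra. pose proof (pow_pos' b n H); lra. Qed.

Lemma geom_mono b n m : 1 < b -> (n <= m)%nat -> geom b n <= geom b m.
Proof.
  intros Hb H; induction H. lra. simpl; pose proof (pow_pos' b m Hb); lra.
Qed.

Lemma idx_eq b n B : 1 < b -> geom b n < B <= geom b (S n) -> eann_index b B = n.
Proof.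
  intros Hb H. unfold eann_index.
  pose proof (epsilon_spec (inhabits O) (fun n => geom b n < B <= geom b (S n))
     (ex_intro _ n H)) as H1. cbv beta in H1.
  set (k := epsilon _ _) in *.
  destruct (lt_eq_lt_dec k n) as [[Hl|He]|Hl]; auto.
  - pose proof (geom_mono b (S k) n Hb Hl). lra.
  - pose proof (geom_mono b (S n) k Hb Hl); lra.
Qed.

Lemma idx_ex_aux b n B : 1 < b -> 0 < B -> B <= geom b n ->
  exists k, geom b k < B <= geom b (S k).
Proof.
  intros Hb HB; induction n; intros H. simpl in H; lra.
  destruct (Rle_dec B (geom b n)) as [H'|H']. auto.
  exists n; lra.
Qed.

Lemma pow_big b M : 1 < b -> exists n, M <= b ^ n.
Proof.
  intros Hb. destruct (Pow_x_infinity b) with (b := M) as [N HN].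
  rewrite Rabs_pos_eq; lra.
  exists N. specialize (HN N (le_n N)). rewrite Rabs_pos_eq in HN.
  lra. pose proof (pow_pos' b N Hb); lra.
Qed.

Lemma idx_ex b B : 1 < b -> 0 < B -> exists k, geom b k < B <= geom b (S k).
Proof.
  intros Hb HB. destruct (pow_big b B Hb) as [N HN].
  apply (idx_ex_aux b (S N)); auto. simpl. pose proof (geom_ge0 b N Hb); lra.
Qed.

Lemma C1 b m B : 1 < b -> geom b (S m) < B <= geom b (S m) + b ^ m ->
  eann_C b B = B / b ^ m.
Proof.
  intros Hb H. unfold eann_C, eann_depth, eann_z.
  pose proof (pow_le_S b m Hb).
  rewrite (idx_eq b (S m) B Hb).
  2:{ change (geom b (S (S m))) with (geom b (S m) + b ^ (S m)). lra. }
  destruct (Rlt_dec (b ^ m) (B - geom b (S m))). lra. reflexivity.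
Qed.

Lemma C2 b m B : 1 < b -> geom b (S m) + b ^ m < B <= geom b (S (S m)) ->
  eann_C b B = B / (B - geom b (S m)).
Proof.
  intros Hb H. unfold eann_C, eann_depth, eann_z.
  pose proof (pow_pos' b m Hb).
  rewrite (idx_eq b (S m) B Hb) by lra.
  destruct (Rlt_dec (b ^ m) (B - geom b (S m))). reflexivity. lra.
Qed.

Lemma div_le x d K : 0 < d -> x <= K * d -> x / d <= K.
Proof.
  intros Hd H. apply Rmult_le_reg_r with d; auto.
  unfold Rdiv; rewrite Rmult_assoc, Rinv_l by lra; lra.
Qed.

Lemma div_gt1 x d : 0 < d -> d < x -> 1 < x / d.
Proof.
  intros Hd H. apply Rmult_lt_reg_r with d; auto.
  unfold Rdiv; rewrite Rmult_assoc, Rinv_l by lra; lra.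
Qed.

Lemma Kmul b d : 1 < b -> (2 + 1 / (b - 1)) * d = 2 * d + d / (b - 1).
Proof. intros; field; lra. Qed.


Lemma piece1 b m : 1 < b ->
  is_RInt (eann_C b) (geom b (S m)) (geom b (S m) + b ^ m) (geom b (S m) + b ^ m / 2).
Proof.
  intros Hb. pose proof (pow_pos' b m Hb) as Hp.
  set (g := geom b (S m)) in *. set (p := b ^ m) in *.
  apply is_RInt_ext with (f := fun x => x / p).
  { intros x Hx; rewrite Rmin_left, Rmax_right in Hx by lra.
    symmetry; apply C1; auto; unfold g, p in *; lra. }
  replace (g + p / 2) with (minus ((fun x => x * x / (2 * p)) (g + p)) ((fun x => x * x / (2 * p)) g)).
  2:{ unfold minus, plus, opp; simpl; field; lra. }
  apply (is_RInt_derive (fun x => x * x / (2 * p)) (fun x => x / p)).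
  - intros x _. auto_derive. lra. field; lra.
  - intros x _. apply (@ex_derive_continuous R_AbsRing R_NormedModule (fun x => x / p)). auto_derive. lra.
Qed.

Lemma piece2 b m : 1 < b ->
  is_RInt (eann_C b) (geom b (S m) + b ^ m) (geom b (S (S m)))
     (b * b ^ m - b ^ m + geom b (S m) * ln b).
Proof.
  intros Hb. pose proof (pow_pos' b m Hb) as Hp.
  change (geom b (S (S m))) with (geom b (S m) + b * b ^ m).
  set (g := geom b (S m)) in *. set (p := b ^ m) in *.
  assert (Hbp : p <= b * p) by nra.
  apply is_RInt_ext with (f := fun x => x / (x - g)).
  { intros x Hx; rewrite Rmin_left, Rmax_right in Hx by lra.
    symmetry; apply C2; auto. change (geom b (S (S m))) with (g + b * p). fold g p. lra. }
  replace (b * p - p + g * ln b) with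
    (minus ((fun x => x + g * ln (x - g)) (g + b * p)) ((fun x => x + g * ln (x - g)) (g + p))).
  2:{ unfold minus, plus, opp; simpl.
      replace (g + b * p - g) with (b * p) by ring.
      replace (g + p - g) with p by ring.
      rewrite ln_mult by lra. ring. }
  apply (is_RInt_derive (fun x => x + g * ln (x - g)) (fun x => x / (x - g))).
  - intros x Hx. rewrite Rmin_left, Rmax_right in Hx by lra.
    auto_derive. lra. field; lra.
  - intros x Hx. rewrite Rmin_left, Rmax_right in Hx by lra.
    apply (@ex_derive_continuous R_AbsRing R_NormedModule (fun x => x / (x - g))). auto_derive. lra.
Qed.


Lemma geom_le b m : 1 < b -> geom b (S m) <= b ^ m + b ^ m / (b - 1).
Proof.
  intros Hb. apply Rmult_le_reg_r with (b - 1). lra.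
  rewrite geom_closed.
  replace ((b ^ m + b ^ m / (b - 1)) * (b - 1)) with (b * b ^ m) by (field; lra).
  simpl; lra.
Qed.

Lemma ln_pos b : 1 < b -> 0 < ln b.
Proof. intros. rewrite <- ln_1. apply ln_increasing; lra. Qed.

Lemma main_int b (hb : 1 < b) N : exists v, is_RInt (eann_C b) 1 (geom b (S N)) v /\
  v <= (1 - 1 / (2 * b) + (1 + ln b) / (b - 1)) * (geom b (S N) - 1).
Proof.
  induction N as [|N [v [Hv Hle]]].
  - exists 0. replace (geom b 1) with 1 by (simpl; ring). split.
    exact (is_RInt_point (eann_C b) 1). lra.
  - exists (v + (geom b (S N) + b ^ N / 2) + (b * b ^ N - b ^ N + geom b (S N) * ln b)).
    split.
    + exact (is_RInt_Chasles _ _ _ _ _ _ (is_RInt_Chasles _ _ _ _ _ _ Hv (piece1 b N hb)) (piece2 b N hb)).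
    + change (geom b (S (S N))) with (geom b (S N) + b * b ^ N).
      pose proof (geom_le b N hb) as Hg. pose proof (ln_pos b hb) as Hl.
      pose proof (pow_pos' b N hb) as Hp.
      set (g := geom b (S N)) in *. set (p := b ^ N) in *.
      assert (E : (1 - 1 / (2 * b) + (1 + ln b) / (b - 1)) * (g + b * p - 1)
        = (1 - 1 / (2 * b) + (1 + ln b) / (b - 1)) * (g - 1)
          + (b * p - p / 2 + (1 + ln b) * (p + p / (b - 1)))) by (field; lra).
      rewrite E.
      assert ((1 + ln b) * g <= (1 + ln b) * (p + p / (b - 1))).
      { apply Rmult_le_compat_l; lra. }
      nra.
Qed.

Theorem proposition1 (b : R) (hb : 1 < b) :
  (forall B : R, 1 < B -> 1 < eann_C b B) /\
  is_lub (fun c => exists B : R, 1 <= B /\ c = eann_C b B) (2 + 1 / (b - 1)) /\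
  (forall N : nat, (1 <= N)%nat ->
     ex_RInt (eann_C b) 1 (geom b (S N)) /\
     RInt (eann_C b) 1 (geom b (S N)) / (geom b (S N) - 1)
       <= 1 - 1 / (2 * b) + (1 + ln b) / (b - 1)).
Proof.
  pose proof (Kmul b) as KM.
  assert (Hinv : 0 < 1 / (b - 1)) by (apply Rdiv_lt_0_compat; lra).
  split; [|split].
  - intros B HB. destruct (idx_ex b B hb) as [n Hn]; [lra|].
    destruct n as [|m]. { simpl in Hn; lra. }
    pose proof (pow_pos' b m hb) as Hp.
    pose proof (geom_ge0 b m hb) as Hg0.
    change (geom b (S m)) with (geom b m + b ^ m) in *.
    destruct (Rle_dec B (geom b m + b ^ m + b ^ m)).
    + rewrite (C1 b m B hb) by (change (geom b (S m)) with (geom b m + b ^ m); lra). apply div_gt1; lra.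
    + apply Rnot_le_lt in n. rewrite (C2 b m B hb) by (change (geom b (S m)) with (geom b m + b ^ m); lra). change (geom b (S m)) with (geom b m + b ^ m). apply div_gt1; lra.
  - split.
    + intros c [B [HB ->]]. destruct (Req_dec B 1) as [->|HB1].
      * unfold eann_C, eann_depth, eann_z.
        rewrite (idx_eq b 0 1 hb) by (simpl; lra). simpl.
        replace ((1 - 0) / (1 - 0)) with 1 by field. lra.
      * assert (HB' : 1 < B) by lra.
        destruct (idx_ex b B hb) as [n Hn]; [lra|].
        destruct n as [|m]. { simpl in Hn; lra. }
        pose proof (pow_pos' b m hb) as Hp.
        pose proof (geom_le b m hb) as Hg.
        assert (Hq : 0 <= b ^ m / (b - 1)) by (apply Rdiv_le_0_compat; lra).
        destruct (Rle_dec B (geom b (S m) + b ^ m)).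
        -- rewrite (C1 b m B hb) by lra. apply div_le; auto. rewrite KM; lra.
        -- rewrite (C2 b m B hb) by lra.
           assert (Hd : b ^ m / (b - 1) <= (B - geom b (S m)) / (b - 1)).
           { unfold Rdiv; apply Rmult_le_compat_r.
             left; apply Rinv_0_lt_compat; lra. lra. }
           apply div_le; [lra|]. rewrite KM; lra.
    + intros M HM. destruct (Rle_dec (2 + 1 / (b - 1)) M) as [|HMK]; auto.
      exfalso. set (e := 2 + 1 / (b - 1) - M).
      assert (He : 0 < e) by (unfold e; lra).
      destruct (pow_big b (1 / ((b - 1) * e) + 1) hb) as [m Hm].
      pose proof (pow_pos' b m hb) as Hp.
      assert (Hc := HM (eann_C b (geom b (S m) + b ^ m))).
      rewrite (C1 b m (geom b (S m) + b ^ m) hb) in Hc.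
      2:{ split; lra. }
      assert (Hc' : M >= (geom b (S m) + b ^ m) / b ^ m).
      { apply Rle_ge, Hc. exists (geom b (S m) + b ^ m). split.
        - pose proof (geom_ge0 b m hb). change (geom b (S m)) with (geom b m + b ^ m).
          pose proof (pow_ge1 b m hb). lra.
        - symmetry; apply C1; auto; lra. }
      assert (Hg : geom b (S m) = (b * b ^ m - 1) / (b - 1)).
      { apply Rmult_eq_reg_r with (b - 1); [|lra].
        rewrite geom_closed. simpl. field. lra. }
      assert (Hval : (geom b (S m) + b ^ m) / b ^ m
                     = 2 + 1 / (b - 1) - / ((b - 1) * b ^ m)).
      { rewrite Hg. field. lra. }
      assert (Hsm : / ((b - 1) * b ^ m) < e).
      { rewrite <- (Rinv_inv e). apply Rinv_lt_contravar.
        - apply Rmult_lt_0_compat. apply Rinv_0_lt_compat; lra.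
          apply Rmult_lt_0_compat; lra.
        - assert (H1 : (b - 1) * (1 / ((b - 1) * e) + 1) <= (b - 1) * b ^ m).
          { apply Rmult_le_compat_l; lra. }
          replace ((b - 1) * (1 / ((b - 1) * e) + 1)) with (/ e + (b - 1)) in H1
            by (field; lra).
          lra. }
      unfold e in Hsm. lra.
  - intros N HN. destruct (main_int b hb N) as [v [Hv Hle]].
    split. exists v; exact Hv.
    rewrite (is_RInt_unique _ _ _ _ Hv).
    assert (Hlen : geom b 2 <= geom b (S N)) by (apply geom_mono; [exact hb| lia]).
    assert (H2 : geom b 2 = 1 + b) by (simpl; ring).
    apply div_le; lra.
Qed.
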